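(* Let $\varphi\in\mathrm{THT}^{1}$ satisfy the almost-empty requirement. Then $\varphi$ has an equilibrium model if and only if the formula $\varphi\wedge\mathsf F\mathsf G\bigwedge_{p\in P}\neg p$ is LTL-satisfiable.
   Context: Fix a finite set $P$ of atomic propositions. THT formulas over $P$: $\varphi ::= p \mid \bot \mid \varphi\vee\varphi \mid \varphi\wedge\varphi \mid \varphi\rightarrow\varphi \mid \mathsf{X}\varphi \mid \varphi\,\mathsf{U}\,\varphi \mid \varphi\,\mathsf{R}\,\varphi$, with $\neg\varphi:=\varphi\rightarrow\bot$, $\top:=\neg\bot$, and $\mathsf F\varphi$, $\mathsf G\varphi$ meaning $\top\mathsf U\varphi$ and $\bot\mathsf R\varphi$. A THT interpretation is a pair $M=(H,T)$ of infinite words over $2^P$ with $H(i)\subseteq T(i)$ for all $i$; it is total if $H=T$. Satisfaction $M,i\models\varphi$ is defined by: - $M,i\not\models\bot$; - $M,i\models p$ iff $p\in H(i)$; - $\vee$ and $\wedge$ are interpreted as usual; - $M,i\models\varphi\rightarrow\psi$ iff for both $H'\in\{H,T\}$, either $(H',T),i\not\models\varphi$ or $(H',T),i\models\psi$; - temporal modalities have their usual LTL clauses evaluated in $M$. $M\models\varphi$ means $M,0\models\varphi$. An equilibrium model of $\varphi$ is a total $(T,T)\models\varphi$ with $(H,T)\not\models\varphi$ whenever $H(i)\subseteq T(i)$ for all $i$ and $H\ne T$. LTL-satisfiability refers to standard LTL semantics over infinite words over $2^P$ (classical implication). $\mathrm{THT}^1$ is the set of THT formulas (all temporal modalities allowed)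 with implication height at most $1$, i.e. no nesting of $\rightarrow$, where negation counts as an implication. A position $i$ is empty in $(H,T)$ if $H(i)=\emptyset$. A total interpretation is almost-empty if it has only finitely many non-empty positions. $\varphi$ satisfies the almost-empty requirement if every equilibrium model of $\varphi$ is almost-empty. *)

(* Defs.v *)
From mathcomp Require Import all_boot.
Set Implicit Arguments. Unset Strict Implicit. Unset Printing Implicit Defensive.

Section THT.
Variable P : finType.

Inductive formula : Type :=
| Atom of P
| Bot
| Or of formula & formula
| And of formula & formula
| Impl of formula & formula
| Next of formula
| Until of formula & formula
| Release of formula & formula.

Definition Neg (f : formula) := Impl f Bot.
Definition Top := Neg Bot.
Definition Fin (f : formula) := Until Top f.
Definition Glob (f : formula) := Release Bot f.

Definition trace := nat -> {set P}.

Fixpoint tht_sat (H T : trace) (i : nat) (f : formula) {struct f} : Prop :=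
  match f with
  | Atom p => p \in H i
  | Bot => False
  | Or a b => tht_sat H T i a \/ tht_sat H T i b
  | And a b => tht_sat H T i a /\ tht_sat H T i b
  | Impl a b => (tht_sat H T i a -> tht_sat H T i b) /\
                (tht_sat T T i a -> tht_sat T T i b)
  | Next a => tht_sat H T i.+1 a
  | Until a b => exists j, i <= j /\ tht_sat H T j b /\
                   (forall k, i <= k -> k < j -> tht_sat H T k a)
  | Release a b => forall j, i <= j -> tht_sat H T j b \/
                   (exists k, i <= k /\ k < j /\ tht_sat H T k a)
  end.

Fixpoint ltl_sat (T : trace) (i : nat) (f : formula) {struct f} : Prop :=
  match f with
  | Atom p => p \in T i
  | Bot => False
  | Or a b => ltl_sat T i a \/ ltl_sat T i b
  | And a b => ltl_sat T i a /\ ltl_sat T i b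
  | Impl a b => ltl_sat T i a -> ltl_sat T i b
  | Next a => ltl_sat T i.+1 a
  | Until a b => exists j, i <= j /\ ltl_sat T j b /\
                   (forall k, i <= k -> k < j -> ltl_sat T k a)
  | Release a b => forall j, i <= j -> ltl_sat T j b \/
                   (exists k, i <= k /\ k < j /\ ltl_sat T k a)
  end.

Definition LTL_satisfiable (f : formula) : Prop := exists T : trace, ltl_sat T 0 f.

(* implication height (negation = implication into Bot, so it counts) *)
Fixpoint imp_height (f : formula) : nat :=
  match f with
  | Atom _ | Bot => 0
  | Or a b | And a b | Until a b | Release a b => maxn (imp_height a) (imp_height b)
  | Impl a b => (maxn (imp_height a) (imp_height b)).+1
  | Next a => imp_height a
  end.

Definition in_THT1 (f : formula) : Prop := imp_height f <= 1.

Definition equilibrium_model (f : formula) (T : trace) : Prop :=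
  tht_sat T T 0 f /\
  forall H : trace, (forall i, H i \subset T i) -> H <> T -> ~ tht_sat H T 0 f.

Definition almost_empty (T : trace) : Prop :=
  exists n, forall i, n <= i -> T i = set0.

Definition almost_empty_requirement (f : formula) : Prop :=
  forall T, equilibrium_model f T -> almost_empty T.

Definition all_neg_atoms : formula :=
  foldr (fun p acc => And (Neg (Atom p)) acc) Top (enum P).

End THT.

(* Main.v *)
Require Import Defs.
From mathcomp Require Import all_boot.
From Stdlib Require Import Classical FunctionalExtensionality.

Section Aux.
Variable P : finType.
Implicit Types (f : formula P) (H T : trace P).

Lemma tht_ltl f : forall T i, tht_sat T T i f <-> ltl_sat T i f.
Proof.
elim: f => [p|| a IHa b IHb | a IHa b IHb | a IHa b IHb | a IHa | a IHa b IHb | a IHa b IHb] T i /=.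
- by [].
- by [].
- by rewrite IHa IHb.
- by rewrite IHa IHb.
- rewrite IHa IHb; tauto.
- by rewrite IHa.
- split=> -[j [hj [hb hk]]]; exists j; split=> //; split; first by apply/IHb.
    by move=> k h1 h2; apply/IHa; apply: hk.
  by apply/IHb.
  by move=> k h1 h2; apply/IHa; apply: hk.
- split=> h j hj; case: (h j hj) => [hb|[k [h1 [h2 h3]]]].
  + by left; apply/IHb.
  + by right; exists k; split=> //; split=> //; apply/IHa.
  + by left; apply/IHb.
  + by right; exists k; split=> //; split=> //; apply/IHa.
Qed.

Lemma indep f : imp_height f <= 0 -> forall H T T' i, tht_sat H T i f -> tht_sat H T' i f.
Proof.
elim: f => [p|| a IHa b IHb | a IHa b IHb | a IHa b IHb | a IHa | a IHa b IHb | a IHa b IHb] /=;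
  rewrite ?geq_max; try move=> /andP[ha hb]; try move=> ha; move=> H T T' i //.
- by case=> [x|x]; [left; apply: IHa x|right; apply: IHb x].
- by case=> x y; split; [apply: IHa x|apply: IHb y].
- by apply: IHa.
- case=> j [hj [hb' hk]]; exists j; split=> //; split; first by apply: IHb hb'.
  by move=> k h1 h2; apply: IHa (hk k h1 h2).
- move=> h j hj; case: (h j hj) => [x|[k [h1 [h2 h3]]]].
  + by left; apply: IHb x.
  + by right; exists k; split=> //; split=> //; apply: IHa h3.
Qed.

Lemma pers f : imp_height f <= 1 -> forall H T i, tht_sat H T i f -> tht_sat H H i f.
Proof.
elim: f => [p|| a IHa b IHb | a IHa b IHb | a IHa b IHb | a IHa | a IHa b IHb | a IHa b IHb] /=;
  rewrite ?geq_max; try move=> /andP[ha hb]; try move=> ha; move=> H T i //.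
- by case=> [x|x]; [left; apply: IHa x|right; apply: IHb x].
- by case=> x y; split; [apply: IHa x|apply: IHb y].
- move: ha; rewrite ltnS geq_max => /andP[ha hb] [h1 _].
  have g: tht_sat H H i a -> tht_sat H H i b.
    by move=> x; apply: (indep _ hb _ _ _ _ (h1 (indep _ ha _ _ _ _ x))).
  by split.
- by apply: IHa.
- case=> j [hj [hb' hk]]; exists j; split=> //; split; first by apply: IHb hb'.
  by move=> k h1 h2; apply: IHa (hk k h1 h2).
- move=> h j hj; case: (h j hj) => [x|[k [h1 [h2 h3]]]].
  + by left; apply: IHb x.
  + by right; exists k; split=> //; split=> //; apply: IHa h3.
Qed.

Lemma neg_atoms_empty T j s :
  ltl_sat T j (foldr (fun p acc => And (Neg (Atom p)) acc) (Top P) s) <->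
  (forall p, p \in s -> p \notin T j).
Proof.
elim: s => [|x s IH] /=.
- by split=> // _ _.
- rewrite IH; split.
  + move=> [h1 h2] p; rewrite inE => /orP[/eqP->|]; last by apply: h2.
    by apply/negP.
  + move=> h; split; first by move=> hx; move: (h x (mem_head _ _)); rewrite hx.
    by move=> p hp; apply: h; rewrite inE hp orbT.
Qed.

Lemma all_neg_iff T j : ltl_sat T j (all_neg_atoms P) <-> T j = set0.
Proof.
rewrite /all_neg_atoms neg_atoms_empty; split.
- by move=> h; apply/setP=> p; rewrite in_set0; apply/negbTE/h; rewrite mem_enum.
- by move=> -> p _; rewrite in_set0.
Qed.

End Aux.

Theorem mainTheorem12 (P : finType) (phi : formula P) :
  in_THT1 phi -> almost_empty_requirement phi ->
  ((exists T : trace P, equilibrium_model phi T) <->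
   LTL_satisfiable (And phi (Fin (Glob (all_neg_atoms P))))).
Proof.
move=> h1 hae; split.
- move=> [T eq]; have [n hn] := hae T eq; exists T; split.
    by apply/tht_ltl; case: eq.
  exists n; split=> //; split; last by move=> k _ _ /=.
  by move=> j hj; left; apply/all_neg_iff; apply: hn.
- move=> [T [hphi [n [_ [hg _]]]]].
  have hT : forall j, n <= j -> T j = set0.
    move=> j hj; case: (hg j hj) => [/all_neg_iff //|[k [_ [_ []]]]].
  pose good (H : trace P) := (forall i, H i \subset T i) /\ ltl_sat H 0 phi.
  pose meas (H : trace P) := \sum_(i < n) #|H i|.
  have key : forall m H, meas H = m -> good H -> exists H0, good H0 /\
      forall H' : trace P, (forall i, H' i \subset H0 i) -> H' <> H0 -> ~ ltl_sat H' 0 phi.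
    elim/ltn_ind=> m IH H hm [hsub hsat].
    case: (classic (exists H' : trace P, (forall i, H' i \subset H i) /\ H' <> H /\ ltl_sat H' 0 phi)).
    + move=> [H' [s' [ne' sat']]].
      have [i hi] : exists i, H' i <> H i.
        apply: NNPP => c; apply: ne'; apply: functional_extensionality => i.
        by apply: NNPP => d; apply: c; exists i.
      have lti : i < n.
        rewrite ltnNge; apply/negP => hni; apply: hi.
        have e : H i = set0 by apply/eqP; rewrite -subset0 -(hT i hni) hsub.
        by rewrite e; apply/eqP; rewrite -subset0 -e s'.
      apply: (IH (meas H')) => //.
        rewrite -hm /meas [X in X < _](bigD1 (Ordinal lti)) //= [X in _ < X](bigD1 (Ordinal lti)) //=.
        rewrite -addSn; apply: leq_add.
          by apply: proper_card; rewrite properEneq s' andbT; apply/eqP.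
        by apply: leq_sum => j _; apply: subset_leq_card.
      by split=> // j; apply: subset_trans (s' j) (hsub j).
    + move=> nex; exists H; split; first by [].
      by move=> H' s ne sat; apply: nex; exists H'.
  have [H0 [[_ hs0] hmin]] := key _ T erefl (conj (fun i => subxx _) hphi).
  exists H0; split; first by apply/tht_ltl.
  move=> H' s ne sat; apply: (hmin H' s ne); apply/tht_ltl; exact: pers h1 _ _ _ sat.
Qed.
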